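(* Call a real sequence $A$ over $\mathbb{Z}^2$ a counterexample if $|A|=3.99$, every multiplicity is $\le\frac12$, every line in $\mathbb{R}^2$ contains at most $\frac32$ points of $A$, and $\Sigma^1_{\mathbb{R}}(A)$ contains no lattice point of $\mathbb{Z}^2$ in its interior. If a counterexample exists, then there exists a counterexample $A$ with the following property: whenever $v_1,v_2,v_3,v$ are distinct lattice points with $\mu(v_1),\mu(v_2),\mu(v_3)>0$ and $v$ lies in the interior or on the boundary of the triangle with vertices $v_1,v_2,v_3$, then either $\mu(v)=\frac12$, or $v$ lies on a line $\ell$ containing exactly $\frac32$ points of $A$; moreover, if $v$ lies on the boundary of the triangle, such a line $\ell$ is not the line supporting the side of the triangle containing $v$.
   Context: A real sequence $A$ over $\mathbb{Z}^2$ is a family of pairs $(a_i,\mu_i)$ of distinct points $a_i\in\mathbb{Z}^2$ and non-negative reals $\mu_i$ (multiplicities; $\mu(v)$ is the multiplicity of $v$, $0$ if $v$ does not occur); $|A|=\sum_i\mu_i$. A set $X$ contains $\sum_{i:a_i\in X}\mu_i$ points of $A$. $\Sigma^1_{\mathbb{R}}(A)=\{\sum_i t_ia_i : t_i\in[0,\mu_i],\ \sum_i t_i=1\}$. *)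

(* Defs.v *)
From HB Require Import structures.
From mathcomp Require Import all_boot all_order all_algebra.
From mathcomp Require Import all_classical all_reals all_analysis.
Set Implicit Arguments. Unset Strict Implicit. Unset Printing Implicit Defensive.
Import Order.TTheory GRing.Theory Num.Theory.
Import numFieldNormedType.Exports.
Local Open Scope ring_scope.
Local Open Scope classical_set_scope.

Definition pt := (int * int)%type.

Section RealSeq.
Variable R : realType.

(* A real sequence over Z^2: a finite family of pairs (a_i, mu_i). *)
Definition rseq := seq (pt * R).

Definition valid_rseq (A : rseq) : Prop :=
  uniq (map fst A) /\ all (fun x => 0 <= x.2) A.

Definition emb (v : pt) : R * R := (v.1%:~R, v.2%:~R).

Definition mult (A : rseq) (v : pt) : R := \sum_(x <- A | x.1 == v) x.2.

Definition total (A : rseq) : R := \sum_(x <- A) x.2.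

Definition count_in (A : rseq) (X : set (R * R)) : R :=
  \sum_(x <- A | `[< X (emb x.1) >]) x.2.

Definition is_line (L : set (R * R)) : Prop :=
  exists a b c : R, (a != 0 \/ b != 0) /\
    L = [set p | a * p.1 + b * p.2 = c].

Definition sigma1 (A : rseq) : set (R * R) :=
  [set p | exists t : 'I_(size A) -> R,
     (forall i : 'I_(size A), 0 <= t i <= (tnth (in_tuple A) i).2) /\
     \sum_(i < size A) t i = 1 /\
     p = (\sum_(i < size A) t i * ((tnth (in_tuple A) i).1.1)%:~R,
          \sum_(i < size A) t i * ((tnth (in_tuple A) i).1.2)%:~R)].

Definition in_triangle (p1 p2 p3 p : R * R) : Prop :=
  exists a b c : R, 0 <= a /\ 0 <= b /\ 0 <= c /\ a + b + c = 1 /\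
    p = (a * p1.1 + b * p2.1 + c * p3.1, a * p1.2 + b * p2.2 + c * p3.2).

Definition on_segment (p1 p2 p : R * R) : Prop :=
  exists a : R, 0 <= a <= 1 /\
    p = ((1 - a) * p1.1 + a * p2.1, (1 - a) * p1.2 + a * p2.2).

Definition line_through (p1 p2 : R * R) : set (R * R) :=
  [set p | exists t : R,
     p = (p1.1 + t * (p2.1 - p1.1), p1.2 + t * (p2.2 - p1.2))].

Definition counterexample (A : rseq) : Prop :=
  [/\ valid_rseq A,
      total A = 399%:R / 100%:R,
      all (fun x => x.2 <= 2^-1) A,
      (forall L, is_line L -> count_in A L <= 3%:R / 2%:R) &
      ~ (exists v : pt, interior (sigma1 A) (emb v))].

Definition triangle_property (A : rseq) : Prop :=
  forall v1 v2 v3 v : pt,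
    uniq [:: v1; v2; v3; v] ->
    0 < mult A v1 -> 0 < mult A v2 -> 0 < mult A v3 ->
    in_triangle (emb v1) (emb v2) (emb v3) (emb v) ->
    mult A v = 2^-1 \/
    exists L : set (R * R),
      [/\ is_line L, L (emb v), count_in A L = 3%:R / 2%:R &
          forall p q : pt, (p, q) \in [:: (v1, v2); (v2, v3); (v1, v3)] ->
            on_segment (emb p) (emb q) (emb v) ->
            L <> line_through (emb p) (emb q)].

End RealSeq.

(* Main.v *)
Require Import Defs.
From HB Require Import structures.
From mathcomp Require Import all_boot all_order all_algebra.
From mathcomp Require Import all_classical all_reals all_analysis.
From mathcomp Require Import ring lra zify.
Set Implicit Arguments. Unset Strict Implicit. Unset Printing Implicit Defensive.
Import Order.TTheory GRing.Theory Num.Theory.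
Import numFieldNormedType.Exports.
Local Open Scope ring_scope.
Local Open Scope classical_set_scope.

Section Topo.
Variable R : realType.
Variable N : nat.
Local Notation V := 'rV[R]_N.

Lemma cont_sum (I : Type) (r : seq I) (P : pred I) (F : I -> V -> R) :
  (forall i, continuous (F i)) -> continuous (fun x => \sum_(i <- r | P i) F i x).
Proof.
move=> hF; elim: r => [|a r IH].
  by under eq_fun do rewrite big_nil; exact: cst_continuous.
under eq_fun do rewrite big_cons.
case: (P a).
  by move=> x; apply: continuousD; [exact: hF | exact: IH].
exact: IH.
Qed.

Lemma cont_coordc (c : R) k : continuous (fun x : V => x ord0 k * c).
Proof.
move=> x; apply: (@continuousM _ _ (fun x : V => x ord0 k) (fun=> c)).
  exact: coord_continuous.
exact: cst_continuous.
Qed.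

Lemma cont_coord k : continuous (fun x : V => x ord0 k).
Proof. exact: coord_continuous. Qed.

Lemma cont_add (f g : V -> R) : continuous f -> continuous g ->
  continuous (fun x => f x + g x).
Proof. by move=> hf hg x; apply: (@continuousD _ _ _ f g); [exact: hf|exact: hg]. Qed.

Lemma cont_opp (f : V -> R) : continuous f -> continuous (fun x => - f x).
Proof. by move=> hf x; apply: (@continuousN _ _ _ f); exact: hf. Qed.

Lemma closed_leF (f : V -> R) c : continuous f -> closed [set x | f x <= c].
Proof. move=> /continuous_closedP h; have := h _ (@closed_le R c). by []. Qed.

Lemma closed_geF (f : V -> R) c : continuous f -> closed [set x | c <= f x].
Proof. move=> /continuous_closedP h; have := h _ (@closed_ge R c). by []. Qed.

Lemma closed_eqF (f : V -> R) c : continuous f -> closed [set x | f x = c].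
Proof. move=> /continuous_closedP h; have := h _ (@closed_eq R c). by []. Qed.

Lemma closed_all (I : Type) (P : I -> V -> Prop) :
  (forall i, closed [set x | P i x]) -> closed [set x | forall i, P i x].
Proof.
move=> h.
have -> : [set x | forall i, P i x] = \bigcap_(i in setT) [set x | P i x].
  by rewrite predeqE => x; split => [H i _|H i]; [exact: H | exact: H].
by apply: closed_bigI => i _; exact: h.
Qed.

Lemma closed_imp (Q : Prop) (P : V -> Prop) :
  closed [set x | P x] -> closed [set x | Q -> P x].
Proof.
move=> h; case: (pselect Q) => q.
  have -> : [set x | Q -> P x] = [set x | P x].
    by rewrite predeqE => x; split => [H|H _]; [exact: H q | exact: H].
  exact: h.
have -> : [set x | Q -> P x] = setT.
  by rewrite predeqE => x; split => // _ /q.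
exact: closedT.
Qed.

Lemma closed_and (P Q : V -> Prop) :
  closed [set x | P x] -> closed [set x | Q x] -> closed [set x | P x /\ Q x].
Proof. move=> hp hq; exact: (closedI hp hq). Qed.

End Topo.

Section Main.
Variable R : realType.
Variable A0 : rseq R.

Definition nA := size A0.
Definition aa (j : 'I_nA) : pt := (tnth (in_tuple A0) j).1.
Definition m0 (j : 'I_nA) : R := (tnth (in_tuple A0) j).2.
Definition BB : nat := (\max_(x <- A0) (absz x.1.1 + absz x.1.2))%N.
Definition rng : seq int := [seq ((k%:Z) - (BB%:Z))%R | k <- iota 0 (BB.*2.+1)].
Definition SS : seq pt := [seq (x, y) | x <- rng, y <- rng].
Definition mS := size SS.
Definition ss (i : 'I_mS) : pt := nth (0%R, 0%R) SS i.
Definition NN := (mS * nA)%N.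
Local Notation V := 'rV[R]_NN.
Definition lam (x : V) i j := x ord0 (mxvec_index i j).
Definition mu (x : V) i := \sum_j lam x i j.
Definition feas (x : V) : Prop :=
  (forall i j, 0 <= lam x i j) /\ (forall j, \sum_i lam x i j = m0 j) /\
      (forall i, \sum_j lam x i j * (aa j).1%:~R = mu x i * (ss i).1%:~R) /\
      (forall i, \sum_j lam x i j * (aa j).2%:~R = mu x i * (ss i).2%:~R) /\
      (forall i, mu x i <= 2^-1) /\
      (forall L, is_line L -> \sum_(i | `[< L (emb R (ss i)) >]) mu x i <= 3%:R / 2%:R).
Definition fpt (p : pt) : R := - ((p.1%:~R) ^+ 2 + (p.2%:~R) ^+ 2).
Definition phi (x : V) := \sum_i mu x i * fpt (ss i).

Lemma cont_lam i j : continuous (fun x => lam x i j).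
Proof. exact: cont_coord. Qed.

Lemma cont_mu i : continuous (fun x => mu x i).
Proof. by apply: cont_sum => j; exact: cont_lam. Qed.

Lemma cont_muc i c : continuous (fun x => mu x i * c).
Proof.
move=> x; apply: (@continuousM _ _ (fun x => mu x i) (fun=> c)).
  exact: cont_mu.
exact: cst_continuous.
Qed.

Lemma cont_phi : continuous phi.
Proof. by apply: cont_sum => i; exact: cont_muc. Qed.

Lemma closed_feas : closed [set x | feas x].
Proof.
have -> : [set x | feas x] = [set x | (forall i j, 0 <= lam x i j) /\ ((forall j, \sum_i lam x i j = m0 j) /\
      ((forall i, \sum_j lam x i j * (aa j).1%:~R - mu x i * (ss i).1%:~R = 0) /\
      ((forall i, \sum_j lam x i j * (aa j).2%:~R - mu x i * (ss i).2%:~R = 0) /\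
      ((forall i, mu x i <= 2^-1) /\
      (forall L, is_line L -> \sum_(i | `[< L (emb R (ss i)) >]) mu x i <= 3%:R / 2%:R)))))].
  rewrite predeqE => x; split.
    case=> h1 [h2 [h3 [h4 [h5 h6]]]]; do !split => //.
      by move=> i; rewrite h3 subrr.
    by move=> i; rewrite h4 subrr.
  case=> h1 [h2 [h3 [h4 [h5 h6]]]]; do !split => //.
    by move=> i; apply/eqP; rewrite -subr_eq0; apply/eqP.
  by move=> i; apply/eqP; rewrite -subr_eq0; apply/eqP.
apply: closed_and.
  apply: closed_all => i; apply: closed_all => j; apply: closed_geF; exact: cont_lam.
apply: closed_and.
  apply: closed_all => j; apply: closed_eqF; apply: cont_sum => i; exact: cont_lam.
apply: closed_and.
  apply: closed_all => i; apply: closed_eqF; apply: cont_add.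
    by apply: cont_sum => j; exact: cont_coordc.
  by apply: cont_opp; exact: cont_muc.
apply: closed_and.
  apply: closed_all => i; apply: closed_eqF; apply: cont_add.
    by apply: cont_sum => j; exact: cont_coordc.
  by apply: cont_opp; exact: cont_muc.
apply: closed_and.
  apply: closed_all => i; apply: closed_leF; exact: cont_mu.
apply: closed_all => L; apply: closed_imp; apply: closed_leF.
by apply: cont_sum => i; exact: cont_mu.
Qed.

Definition Mtot := \sum_j m0 j.

Lemma feas_box x : feas x -> forall k, 0 <= x ord0 k <= Mtot.
Proof.
case=> h1 [h2 _] k; case/mxvec_indexP: k => i j.
have := h1 i j; rewrite /lam => ->/=.
have -> : x ord0 (mxvec_index i j) = lam x i j by [].
apply: (@le_trans _ _ (m0 j)).
  rewrite -h2 (bigD1 i) //= lerDl; apply: sumr_ge0 => ? _; exact: h1.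
rewrite /Mtot (bigD1 j) //= lerDl; apply: sumr_ge0 => j' _.
rewrite -h2; apply: sumr_ge0 => ? _; exact: h1.
Qed.

Lemma compact_feas : compact [set x | feas x].
Proof.
have hc := @rV_compact R NN (fun=> `[0, Mtot]%classic) (fun=> @segment_compact R 0 Mtot).
apply: (subclosed_compact closed_feas hc).
move=> x /feas_box h k /=; rewrite in_itv /=; exact: h.
Qed.

End Main.

Section Ast.
Variable R : realType.
Variable A0 : rseq R.
Local Notation V := 'rV[R]_(NN A0).
Local Notation mS := (mS A0).
Local Notation ss := (@ss R A0).
Local Notation mu := (@mu R A0).
Local Notation lam := (@lam R A0).
Local Notation feas := (@feas R A0).
Local Notation aa := (@aa R A0).

Lemma uniq_rng : uniq (rng A0).
Proof.
rewrite /rng map_inj_uniq ?iota_uniq // => a b /addIr.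
by case.
Qed.

Lemma uniq_SS : uniq (SS A0).
Proof.
rewrite /SS allpairs_uniq ?uniq_rng // => -[a b] [c d] _ _ /=; by [].
Qed.

Lemma ss_inj : injective ss.
Proof.
move=> i j; rewrite /ss => /eqP; rewrite nth_uniq ?uniq_SS //.
by move/eqP/val_inj.
Qed.

Definition Ast (x : V) : rseq R := [seq (ss i, mu x i) | i <- enum 'I_mS].

Lemma mult_Ast x v : Defs.mult (Ast x) v = \sum_(i | ss i == v) mu x i.
Proof. by rewrite /Defs.mult big_map big_enum_cond. Qed.

Lemma count_Ast x L : count_in (Ast x) L = \sum_(i | `[< L (emb R (ss i)) >]) mu x i.
Proof. by rewrite /count_in big_map big_enum_cond. Qed.

Lemma total_Ast x : Defs.total (Ast x) = \sum_i mu x i.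
Proof. by rewrite /Defs.total big_map big_enum. Qed.

Lemma total_A0 : Defs.total A0 = Mtot A0.
Proof. by rewrite /Defs.total big_tnth. Qed.

Lemma sum_mu x : feas x -> \sum_i mu x i = Mtot A0.
Proof.
case=> _ [h2 _]; rewrite /mu exchange_big /Mtot; apply: eq_bigr => j _; exact: h2.
Qed.

Lemma mu_ge0 x : feas x -> forall i, 0 <= mu x i.
Proof. by case=> h1 _ i; apply: sumr_ge0 => j _; exact: h1. Qed.

Lemma sigma1_map (k : nat) (g : 'I_k -> pt * R) p :
  sigma1 [seq g i | i <- enum 'I_k] p ->
  exists t : 'I_k -> R, (forall i, 0 <= t i <= (g i).2) /\ \sum_i t i = 1 /\
    p = (\sum_i t i * (g i).1.1%:~R, \sum_i t i * (g i).1.2%:~R).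
Proof.
set B := [seq g i | i <- enum 'I_k].
have E : size B = k by rewrite size_map size_enum_ord.
pose x0 : pt * R := ((0%R, 0%R), 0).
have key : forall n' (E : n' = k) (t : 'I_n' -> R),
    (forall i, 0 <= t i <= (nth x0 B i).2) -> \sum_i t i = 1 ->
    p = (\sum_i t i * (nth x0 B i).1.1%:~R, \sum_i t i * (nth x0 B i).1.2%:~R) ->
    exists t : 'I_k -> R, (forall i, 0 <= t i <= (g i).2) /\ \sum_i t i = 1 /\
    p = (\sum_i t i * (g i).1.1%:~R, \sum_i t i * (g i).1.2%:~R).
  move=> n' E' t; subst n' => h1 h2 h3.
  have hn : forall i : 'I_k, nth x0 B i = g i.
    by move=> i; rewrite /B (nth_map i) ?size_enum_ord // nth_ord_enum.
  exists t; split; first by move=> i; rewrite -hn.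
  split => //; rewrite h3; congr (_, _); apply: eq_bigr => i _; by rewrite hn.
case=> t [h1 [h2 h3]]; apply: (key _ E t) => //.
  by move=> i; have := h1 i; rewrite (tnth_nth x0).
rewrite h3; congr (_, _); apply: eq_bigr => i _; by rewrite (tnth_nth x0).
Qed.

Lemma sigma1_Ast x : feas x -> sigma1 (Ast x) `<=` sigma1 A0.
Proof.
move=> hx p /sigma1_map [t [h1 [h2 h3]]].
have hm := mu_ge0 hx.
case: hx => l1 [l2 [l3 [l4 _]]].
pose r i := t i / mu x i.
have r0 i : 0 <= r i by rewrite /r divr_ge0 //; case/andP: (h1 i).
have r1 i : r i <= 1.
  rewrite /r; have [->|mz] := eqVneq (mu x i) 0; first by rewrite invr0 mulr0.
  rewrite ler_pdivrMr ?mul1r; first by case/andP: (h1 i).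
  by rewrite lt_neqAle eq_sym mz hm.
have rm i : r i * mu x i = t i.
  rewrite /r; have [mz|mz] := eqVneq (mu x i) 0.
    by rewrite mz mulr0; apply/eqP; rewrite eq_le; case/andP: (h1 i) => -> /=; rewrite -mz.
  by rewrite divfK.
exists (fun j => \sum_i r i * lam x i j); split.
  move=> j; apply/andP; split.
    by apply: sumr_ge0 => i _; rewrite mulr_ge0.
  rewrite -/(m0 j) -l2; apply: ler_sum => i _; exact: ler_piMl.
split.
  rewrite exchange_big /= -h2.
  by apply: eq_bigr => i _; rewrite -rm /mu mulr_sumr.
rewrite h3; congr (_, _).
  rewrite (eq_bigr (fun j => \sum_i r i * (lam x i j * (aa j).1%:~R))); last first.
    by move=> j _; rewrite mulr_suml; apply: eq_bigr => i _; rewrite mulrA.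
  rewrite exchange_big /=; apply: eq_bigr => i _ /=.
  by rewrite /= -mulr_sumr l3 mulrA rm.
rewrite (eq_bigr (fun j => \sum_i r i * (lam x i j * (aa j).2%:~R))); last first.
  by move=> j _; rewrite mulr_suml; apply: eq_bigr => i _; rewrite mulrA.
rewrite exchange_big /=; apply: eq_bigr => i _ /=.
by rewrite /= -mulr_sumr l4 mulrA rm.
Qed.

Lemma Ast_counter x : counterexample A0 -> feas x -> counterexample (Ast x).
Proof.
move=> hA hx; have hm := mu_ge0 hx.
case: hA => vA tA _ _ iA.
have hx' := hx; case: hx' => _ [_ [_ [_ [l5 l6]]]].
split.
- split.
    by rewrite -map_comp map_inj_uniq ?enum_uniq //; exact: ss_inj.
  by rewrite all_map; apply/allP => i _ /=; exact: hm.
- by rewrite total_Ast sum_mu // -total_A0.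
- by rewrite all_map; apply/allP => i _ /=; exact: l5.
- by move=> L hL; rewrite count_Ast; exact: l6.
- by case=> v hv; apply: iA; exists v; exact: (interiorS (sigma1_Ast hx)).
Qed.

End Ast.

Section Init.
Variable R : realType.
Variable A0 : rseq R.
Local Notation V := 'rV[R]_(NN A0).
Local Notation mS := (mS A0).
Local Notation ss := (@ss R A0).
Local Notation mu := (@mu R A0).
Local Notation lam := (@lam R A0).
Local Notation feas := (@feas R A0).
Local Notation aa := (@aa R A0).
Local Notation m0 := (@m0 R A0).
Local Notation BB := (BB A0).

Lemma mem_rng z : (z \in rng A0) = (- (BB%:Z) <= z) && (z <= BB%:Z).
Proof.
apply/idP/idP.
  case/mapP => k; rewrite mem_iota add0n => hk ->.
  apply/andP; split; lia.
case/andP => h1 h2; apply/mapP; exists (absz (z + BB%:Z)%R).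
  rewrite mem_iota add0n /=; lia.
lia.
Qed.

Lemma mem_SS (p : pt) : (p \in SS A0) = (p.1 \in rng A0) && (p.2 \in rng A0).
Proof.
apply/allpairsP/idP.
  by case=> -[a b] [/= ha hb ->]; rewrite ha hb.
by case/andP => h1 h2; exists p; split => //; case: p {h1 h2}.
Qed.

Lemma aa_SS j : aa j \in SS A0.
Proof.
have hb : forall z : int, (absz z <= BB)%N -> z \in rng A0.
  by move=> z hz; rewrite mem_rng; apply/andP; split; lia.
have hj : (absz (aa j).1 + absz (aa j).2 <= BB)%N.
  rewrite /BB /aa.
  exact: (@leq_bigmax_seq _ A0 xpredT (fun x : pt * R => absz x.1.1 + absz x.1.2)%N _ (mem_tnth j (in_tuple A0))).
rewrite mem_SS; apply/andP; split; apply: hb; lia.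
Qed.

Lemma ss_ex w : w \in SS A0 -> exists i0, ss i0 = w.
Proof.
move=> hw; have hi : (index w (SS A0) < mS)%N by rewrite index_mem.
by exists (Ordinal hi); rewrite /ss /= nth_index.
Qed.

Lemma sum_single (G : 'I_mS -> R) i0 : (forall i, i != i0 -> G i = 0) ->
  \sum_i G i = G i0.
Proof.
move=> h; rewrite (bigD1 i0) //= big1 ?addr0 // => i; exact: h.
Qed.

Lemma mult_le (A : rseq R) v c : uniq (map fst A) -> all (fun x => x.2 <= c) A ->
  0 <= c -> Defs.mult A v <= c.
Proof.
rewrite /Defs.mult; elim: A => [|x A IH] /=; first by rewrite big_nil.
case/andP => hx hu /andP [hc ha] c0; rewrite big_cons.
case: eqP => [e|_]; last exact: IH.
rewrite big_seq_cond big1 ?addr0 // => y /andP [hy /eqP ey].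
exfalso; move: hx; rewrite e -ey; by rewrite (map_f fst hy).
Qed.

Definition lam0 (i : 'I_mS) (j : 'I_(nA A0)) : R := if ss i == aa j then m0 j else 0.
Definition x0 : V := mxvec (\matrix_(i, j) lam0 i j).

Lemma lam_x0 i j : lam x0 i j = lam0 i j.
Proof. by rewrite /lam /x0 mxvecE mxE. Qed.

Lemma feas_x0 : counterexample A0 -> feas x0.
Proof.
case=> -[vu vp] _ vh vl _.
have m0ge j : 0 <= m0 j by have := allP vp _ (mem_tnth j (in_tuple A0)).
have sumi j (P : pred 'I_mS) : \sum_(i | P i) lam0 i j = 
    if `[< exists2 i, ss i = aa j & P i >] then m0 j else 0.
  have [i0 e] := ss_ex (aa_SS j).
  rewrite big_mkcond /= (@sum_single _ i0); last first.
    move=> i ne; rewrite /lam0; case: (P i) => //; case: eqP => // e'.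
    by move: ne; rewrite (ss_inj (etrans e' (esym e))) eqxx.
  rewrite /lam0 e eqxx; case: ifP => hP.
    by rewrite asboolT //; exists i0.
  rewrite asboolF //; case=> i ei hi.
  by move: hP; rewrite -(ss_inj (etrans ei (esym e))) hi.
have mu0 i : mu x0 i = Defs.mult A0 (ss i).
  rewrite /mu /Defs.mult [RHS]big_tnth [RHS]big_mkcond /=; apply: eq_bigr => j _.
  by rewrite lam_x0 /lam0 eq_sym.
split.
  by move=> i j; rewrite lam_x0 /lam0; case: ifP.
split.
  move=> j; under eq_bigr do rewrite lam_x0.
  by rewrite (sumi j xpredT) asboolT //; have [i0 e] := ss_ex (aa_SS j); exists i0.
split.
  move=> i; rewrite /mu mulr_suml; apply: eq_bigr => j _.
  by rewrite lam_x0 /lam0; case: eqP => [->|]; rewrite ?mul0r.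
split.
  move=> i; rewrite /mu mulr_suml; apply: eq_bigr => j _.
  by rewrite lam_x0 /lam0; case: eqP => [->|]; rewrite ?mul0r.
split.
  move=> i; rewrite mu0; apply: mult_le => //; lra.
move=> L hL; apply: le_trans (vl L hL); rewrite /mu exchange_big /count_in [X in _ <= X]big_tnth.
rewrite [X in _ <= X]big_mkcond /=; apply: ler_sum => j _.
under eq_bigr do rewrite lam_x0.
rewrite sumi; case: ifP => h1.
  case/asboolP: h1 => i e hi; rewrite -/(aa j) -e.
  by rewrite hi.
by case: ifP => // _; exact: m0ge.
Qed.

End Init.

Section Move.
Variable R : realType.
Variable A0 : rseq R.
Local Notation V := 'rV[R]_(NN A0).
Local Notation mS := (mS A0).
Local Notation ss := (@ss R A0).
Local Notation mu := (@mu R A0).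
Local Notation lam := (@lam R A0).
Local Notation feas := (@feas R A0).
Local Notation aa := (@aa R A0).
Local Notation m0 := (@m0 R A0).
Local Notation phi := (@phi R A0).

Definition cnt (x : V) (L : set (R * R)) := \sum_(i | `[< L (emb R (ss i)) >]) mu x i.

Variable x : V.
Hypothesis hx : feas x.
Variables (k : 'I_mS) (kk : 'I_3 -> 'I_mS) (cc : 'I_3 -> R) (eps : R).
Hypothesis H1 : forall l, kk l != k.
Hypothesis Hc0 : forall l, 0 <= cc l.
Hypothesis Hc1 : \sum_l cc l = 1.
Hypothesis H3x : (ss k).1%:~R = \sum_l cc l * (ss (kk l)).1%:~R :> R.
Hypothesis H3y : (ss k).2%:~R = \sum_l cc l * (ss (kk l)).2%:~R :> R.
Hypothesis H4 : forall l, 0 < mu x (kk l).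
Hypothesis H6 : forall L, is_line L -> L (emb R (ss k)) -> cnt x L = 3%:R / 2%:R ->
  forall l, 0 < cc l -> L (emb R (ss (kk l))).
Hypothesis He0 : 0 < eps.
Hypothesis Hek : mu x k + eps <= 2^-1.
Hypothesis Hel : forall l, eps <= mu x (kk l).
Hypothesis Heg : forall L, is_line L -> cnt x L < 3%:R / 2%:R -> cnt x L + eps <= 3%:R / 2%:R.

Definition ww l j := cc l * lam x (kk l) j / mu x (kk l).
Definition gam i := \sum_l (i == kk l)%:R * cc l.
Definition lamn i j := lam x i j + eps * ((i == k)%:R * \sum_l ww l j - \sum_l (i == kk l)%:R * ww l j).
Definition xn : V := mxvec (\matrix_(i, j) lamn i j).

Lemma lam_xn i j : lam xn i j = lamn i j.
Proof. by rewrite /lam /xn mxvecE mxE. Qed.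

Lemma sum_ind (F : 'I_mS -> R) a : \sum_i (i == a)%:R * F i = F a.
Proof.
rewrite (@sum_single R A0 _ a) ?eqxx ?mul1r // => i /negbTE ->; by rewrite mul0r.
Qed.

Lemma sum_indP (P : pred 'I_mS) (F : 'I_mS -> R) a :
  \sum_(i | P i) (i == a)%:R * F i = if P a then F a else 0.
Proof.
rewrite big_mkcond /= (@sum_single R A0 _ a) ?eqxx ?mul1r //.
by move=> i /negbTE ->; rewrite mul0r; case: (P i).
Qed.

Lemma mu_pos l : mu x (kk l) != 0.
Proof. by rewrite gt_eqF. Qed.

Lemma ww_ge0 l j : 0 <= ww l j.
Proof.
case: hx => h1 _; rewrite /ww divr_ge0 ?mulr_ge0 //; exact: ltW.
Qed.

Lemma sum_ww l : \sum_j ww l j = cc l.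
Proof.
rewrite /ww; rewrite (eq_bigr (fun j => cc l / mu x (kk l) * lam x (kk l) j)); last first.
  by move=> j _; ring.
by rewrite -mulr_sumr -/(mu x (kk l)) divfK // mu_pos.
Qed.

Lemma sum_wwc (crd : pt -> int) :
  (forall i, \sum_j lam x i j * (crd (aa j))%:~R = mu x i * (crd (ss i))%:~R) ->
  forall l, \sum_j ww l j * (crd (aa j))%:~R = cc l * (crd (ss (kk l)))%:~R.
Proof.
move=> hb l; rewrite /ww.
rewrite (eq_bigr (fun j => cc l / mu x (kk l) * (lam x (kk l) j * (crd (aa j))%:~R))); last first.
  by move=> j _; ring.
by rewrite -mulr_sumr hb mulrA divfK // mu_pos.
Qed.

Lemma gam_ge0 i : 0 <= gam i.
Proof. by apply: sumr_ge0 => l _; rewrite mulr_ge0. Qed.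

Lemma gam_le1 i : gam i <= 1.
Proof.
rewrite -Hc1; apply: ler_sum => l _; case: (i == kk l); rewrite ?mul1r ?mul0r //.
Qed.

Lemma gam_k : gam k = 0.
Proof. by apply: big1 => l _; rewrite eq_sym (negbTE (H1 l)) mul0r. Qed.

Lemma mu_xn i : mu xn i = mu x i + eps * ((i == k)%:R - gam i).
Proof.
rewrite /mu; under eq_bigr do rewrite lam_xn /lamn.
rewrite big_split /= -mulr_sumr sumrB -mulr_sumr exchange_big /=.
under [X in _ + eps * (_ * X - _)]eq_bigr do rewrite sum_ww.
rewrite Hc1 mulr1 exchange_big /=; congr (_ + eps * (_ - _)).
by apply: eq_bigr => l _; rewrite -mulr_sumr sum_ww.
Qed.

Lemma bary_xn (crd : pt -> int) :
  (forall i, \sum_j lam x i j * (crd (aa j))%:~R = mu x i * (crd (ss i))%:~R) ->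
  (crd (ss k))%:~R = \sum_l cc l * (crd (ss (kk l)))%:~R :> R ->
  forall i, \sum_j lam xn i j * (crd (aa j))%:~R = mu xn i * (crd (ss i))%:~R.
Proof.
move=> hb h3 i; rewrite mu_xn.
under eq_bigr do rewrite lam_xn /lamn mulrDl.
rewrite big_split /= hb mulrDl; congr (_ + _).
under eq_bigr do rewrite -mulrA.
rewrite -mulr_sumr -mulrA; congr (_ * _).
under eq_bigr do rewrite mulrBl.
rewrite sumrB mulrBl; congr (_ - _).
  under eq_bigr do rewrite -mulrA.
  rewrite -mulr_sumr; case: eqP => [->|_]; rewrite ?mul0r // !mul1r.
  rewrite h3; under eq_bigr do rewrite mulr_suml.
  rewrite exchange_big /=; apply: eq_bigr => l _.
  by rewrite -(sum_wwc hb).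
under eq_bigr do rewrite mulr_suml.
rewrite exchange_big /= /gam mulr_suml; apply: eq_bigr => l _.
under eq_bigr do rewrite -mulrA.
rewrite -mulr_sumr (sum_wwc hb); case: eqP => [->|_]; rewrite ?mul0r ?mul1r //.
Qed.

Lemma col_xn j : \sum_i lam xn i j = m0 j.
Proof.
case: hx => _ [h2 _].
under eq_bigr do rewrite lam_xn /lamn.
rewrite big_split /= h2 -mulr_sumr sumrB.
rewrite (sum_ind (fun=> \sum_l ww l j)) exchange_big /=.
under [X in _ - X]eq_bigr do rewrite (sum_ind (fun=> ww _ j)).
by rewrite subrr mulr0 addr0.
Qed.

Lemma sumww_ind i j : \sum_l (i == kk l)%:R * ww l j = gam i * (lam x i j / mu x i).
Proof.
rewrite /gam mulr_suml; apply: eq_bigr => l _.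
case: eqP => [->|_]; rewrite ?mul0r // !mul1r /ww.
by rewrite mulrA.
Qed.

Lemma nonneg_xn i j : 0 <= lam xn i j.
Proof.
have hx' := hx; case: hx' => h1 _.
rewrite lam_xn /lamn sumww_ind.
case: eqP => [->|_].
  rewrite gam_k mul0r subr0 mul1r addr_ge0 // mulr_ge0 ?(ltW He0) //.
  by apply: sumr_ge0 => l _; exact: ww_ge0.
rewrite mul0r sub0r mulrN subr_ge0.
have [g0|gn0] := eqVneq (gam i) 0; first by rewrite g0 mul0r mulr0.
have [l el] : exists l, i = kk l.
  apply: contrapT => hn; move/eqP: gn0; apply; apply: big1 => l _.
  by case: eqP => [e|]; [exfalso; apply: hn; exists l | rewrite mul0r].
have mpos : 0 < mu x i by rewrite el.
have eg : eps * gam i <= mu x i.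
  apply: le_trans (_ : eps * 1 <= _); first by rewrite ler_wpM2l ?(ltW He0) ?gam_le1.
  by rewrite mulr1 el.
have -> : eps * (gam i * (lam x i j / mu x i)) = (eps * gam i / mu x i) * lam x i j.
  by ring.
by rewrite ler_piMl ?h1 // ler_pdivrMr // mul1r.
Qed.

Lemma mule_xn i : mu xn i <= 2^-1.
Proof.
have hx' := hx; case: hx' => _ [_ [_ [_ [h5 _]]]].
rewrite mu_xn; case: eqP => [->|_].
  by rewrite gam_k subr0 mulr1.
rewrite sub0r mulrN; apply: le_trans (h5 i); rewrite lerBlDr lerDl.
by rewrite mulr_ge0 ?(ltW He0) ?gam_ge0.
Qed.

Lemma cnt_xn L : cnt xn L = cnt x L + eps * ((if `[< L (emb R (ss k)) >] then 1 else 0)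
   - \sum_l (if `[< L (emb R (ss (kk l))) >] then cc l else 0)).
Proof.
rewrite /cnt; under eq_bigr do rewrite mu_xn.
rewrite big_split /= -mulr_sumr sumrB; congr (_ + eps * (_ - _)).
  have := sum_indP (fun i => `[< L (emb R (ss i)) >]) (fun=> 1) k.
  by rewrite /= => <-; apply: eq_bigr => i _; rewrite mulr1.
rewrite /gam exchange_big /=; apply: eq_bigr => l _.
exact: (sum_indP (fun i => `[< L (emb R (ss i)) >]) (fun=> cc l)).
Qed.

Lemma lines_xn L : is_line L -> cnt xn L <= 3%:R / 2%:R.
Proof.
move=> hL; have hx' := hx; case: hx' => _ [_ [_ [_ [_ h6]]]].
have hc := h6 L hL; rewrite -/(cnt x L) in hc.
have Q0 : 0 <= \sum_l (if `[< L (emb R (ss (kk l))) >] then cc l else 0).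
  by apply: sumr_ge0 => l _; case: ifP.
rewrite cnt_xn; case: ifP => hk; last first.
  rewrite sub0r mulrN; apply: le_trans hc; rewrite lerBlDr lerDl mulr_ge0 //.
  exact: ltW.
have [e|ne] := eqVneq (cnt x L) (3%:R / 2%:R).
  have -> : \sum_l (if `[< L (emb R (ss (kk l))) >] then cc l else 0) = 1.
    rewrite -Hc1; apply: eq_bigr => l _; case: ifP => // hl.
    have := Hc0 l; rewrite le_eqVlt => /orP [/eqP <- //|cl].
    move/asboolP: hk => hk.
    by move: hl; rewrite asboolT //; apply: (H6 hL hk e).
  by rewrite subrr mulr0 addr0 e.
have lt : cnt x L < 3%:R / 2%:R by rewrite lt_neqAle ne hc.
apply: le_trans (Heg hL lt); rewrite lerD2l ler_piMr ?(ltW He0) //.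
by rewrite lerBlDr lerDl.
Qed.

Lemma feas_xn : feas xn.
Proof.
have hx' := hx; case: hx' => _ [_ [h3 [h4 _]]].
split; first exact: nonneg_xn.
split; first exact: col_xn.
split; first exact: (bary_xn (crd := fst)).
split; first exact: (bary_xn (crd := snd)).
split; first exact: mule_xn.
exact: lines_xn.
Qed.

Lemma phi_xn : phi xn = phi x + eps * (fpt R (ss k) - \sum_l cc l * fpt R (ss (kk l))).
Proof.
rewrite /phi; under eq_bigr do rewrite mu_xn mulrDl.
rewrite big_split /=; congr (_ + _).
under eq_bigr do rewrite -mulrA.
rewrite -mulr_sumr; congr (_ * _).
rewrite (eq_bigr (fun i => (i == k)%:R * fpt R (ss i) - gam i * fpt R (ss i))); last first.
  by move=> i _; ring.
rewrite sumrB (sum_ind (fun i => fpt R (ss i))) /gam; congr (_ - _).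
rewrite (eq_bigr (fun i => \sum_l (i == kk l)%:R * cc l * fpt R (ss i))); last first.
  by move=> i _; rewrite mulr_suml.
rewrite exchange_big /=; apply: eq_bigr => l _.
rewrite (eq_bigr (fun i => (i == kk l)%:R * (cc l * fpt R (ss i)))); last first.
  by move=> i _; rewrite mulrA.
by rewrite (sum_ind (fun i => cc l * fpt R (ss i))).
Qed.

End Move.

Section Improve.
Variable R : realType.
Variable A0 : rseq R.
Local Notation V := 'rV[R]_(NN A0).
Local Notation mS := (mS A0).
Local Notation ss := (@ss R A0).
Local Notation mu := (@mu R A0).
Local Notation feas := (@feas R A0).
Local Notation phi := (@phi R A0).
Local Notation cnt := (@cnt R A0).

Definition o0 : 'I_3 := @Ordinal 3 0 isT.
Definition o1 : 'I_3 := @Ordinal 3 1 isT.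
Definition o2 : 'I_3 := @Ordinal 3 2 isT.

Lemma ord3_cases (l : 'I_3) : l = o0 \/ l = o1 \/ l = o2.
Proof.
case: l => [[|[|[|n]]] h]; [left|right;left|right;right|by []]; exact: val_inj.
Qed.

Lemma sum3 (F : 'I_3 -> R) : \sum_l F l = F o0 + F o1 + F o2.
Proof.
rewrite !big_ord_recr big_ord0 /= add0r; congr (_ + _ + _); congr F; exact: val_inj.
Qed.

Lemma gap_ex (s : seq R) : exists2 g, 0 < g & forall y, y \in s -> 0 < y -> g <= y.
Proof.
elim: s => [|a s [g g0 hg]]; first by exists 1.
case: (ltP 0 a) => ha.
  exists (Num.min g a); first by rewrite lt_min g0 ha.
  move=> y; rewrite inE => /orP [/eqP ->|ys] y0; rewrite ge_min ?lexx ?orbT //.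
  by rewrite hg.
exists g => // y; rewrite inE => /orP [/eqP ->|ys] y0; last exact: hg.
by move: y0; rewrite ltNge ha.
Qed.

Lemma dist_pos (p q : pt) : p != q ->
  0 < ((p.1%:~R - q.1%:~R) ^+ 2 + (p.2%:~R - q.2%:~R) ^+ 2 :> R).
Proof.
case: p q => [a b] [c d] ne.
have [e1|n1] := eqVneq a c.
  have n2 : b != d by apply: contraNneq ne => ->; rewrite e1.
  rewrite ltr_pwDr ?sqr_ge0 // exprn_even_gt0 //= subr_eq0.
  by rewrite (inj_eq intr_inj).
rewrite ltr_pwDl ?sqr_ge0 // exprn_even_gt0 //= subr_eq0.
by rewrite (inj_eq intr_inj).
Qed.

Lemma conc3 (c0 c1 c2 x0 x1 x2 y0 y1 y2 X Y : R) :
  0 <= c0 -> 0 <= c1 -> 0 <= c2 -> c0 + c1 + c2 = 1 ->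
  X = c0 * x0 + c1 * x1 + c2 * x2 -> Y = c0 * y0 + c1 * y1 + c2 * y2 ->
  0 < (x0 - X) ^+ 2 + (y0 - Y) ^+ 2 -> 0 < (x1 - X) ^+ 2 + (y1 - Y) ^+ 2 ->
  0 < (x2 - X) ^+ 2 + (y2 - Y) ^+ 2 ->
  0 < - (X ^+ 2 + Y ^+ 2) - (c0 * - (x0 ^+ 2 + y0 ^+ 2) + c1 * - (x1 ^+ 2 + y1 ^+ 2)
        + c2 * - (x2 ^+ 2 + y2 ^+ 2)).
Proof.
move=> h0 h1 h2 hs hX hY d0 d1 d2.
have -> : - (X ^+ 2 + Y ^+ 2) - (c0 * - (x0 ^+ 2 + y0 ^+ 2) + c1 * - (x1 ^+ 2 + y1 ^+ 2)
        + c2 * - (x2 ^+ 2 + y2 ^+ 2)) =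
  c0 * ((x0 - X) ^+ 2 + (y0 - Y) ^+ 2) + c1 * ((x1 - X) ^+ 2 + (y1 - Y) ^+ 2) +
  c2 * ((x2 - X) ^+ 2 + (y2 - Y) ^+ 2).
  have hc2 : c2 = 1 - c0 - c1 by rewrite -hs; ring.
  rewrite hX hY hc2; ring.
set D0 := (_ + _ ^+ 2) in d0 *; set D1 := (_ + _ ^+ 2) in d1 *; set D2 := (_ + _ ^+ 2) in d2 *.
have p0 := mulr_ge0 h0 (ltW d0); have p1 := mulr_ge0 h1 (ltW d1); have p2 := mulr_ge0 h2 (ltW d2).
have [c0p|] := ltP 0 c0.
  by have := mulr_gt0 c0p d0; lra.
have [c1p|] := ltP 0 c1.
  by have := mulr_gt0 c1p d1; lra.
move=> c1n c0n; have c2p : 0 < c2 by lra.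
by have := mulr_gt0 c2p d2; lra.
Qed.

Lemma improve (x : V) k (kk : 'I_3 -> 'I_mS) (cc : 'I_3 -> R) :
  feas x ->
  (forall l, kk l != k) -> (forall l, 0 <= cc l) -> \sum_l cc l = 1 ->
  (ss k).1%:~R = \sum_l cc l * (ss (kk l)).1%:~R :> R ->
  (ss k).2%:~R = \sum_l cc l * (ss (kk l)).2%:~R :> R ->
  (forall l, 0 < mu x (kk l)) -> mu x k < 2^-1 ->
  (forall L, is_line L -> L (emb R (ss k)) -> cnt x L = 3%:R / 2%:R ->
    forall l, 0 < cc l -> L (emb R (ss (kk l)))) ->
  exists x', feas x' /\ phi x < phi x'.
Proof.
move=> hx H1 Hc0 Hc1 H3x H3y H4 H5 H6.
pose s := [seq 3%:R / 2%:R - \sum_(i in T) mu x i | T : {set 'I_mS} <- enum {set 'I_mS}] ++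
  ([seq mu x (kk l) | l <- enum 'I_3] ++ [:: 2^-1 - mu x k]).
have [g g0 hg] := gap_ex s.
have Hek : mu x k + g <= 2^-1.
  rewrite -lerBrDl; apply: hg; last by rewrite subr_gt0.
  by rewrite !mem_cat inE eqxx !orbT.
have Hel : forall l, g <= mu x (kk l).
  move=> l; apply: hg => //; rewrite !mem_cat; apply/orP; right; apply/orP; left.
  by apply: map_f; rewrite mem_enum.
have Heg : forall L, is_line L -> cnt x L < 3%:R / 2%:R -> cnt x L + g <= 3%:R / 2%:R.
  move=> L hL hc; rewrite -lerBrDl; apply: hg; last by rewrite subr_gt0.
  rewrite mem_cat; apply/orP; left; apply/mapP.
  exists (finset (fun i : 'I_mS => `[< L (emb R (ss i)) >])); first by rewrite mem_enum.
  by rewrite /cnt; congr (_ - _); apply: eq_bigl => i; rewrite inE.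
exists (xn x k kk cc g); split.
  exact: (feas_xn hx H1 Hc0 Hc1 H3x H3y H4 H6 g0 Hek Hel Heg).
rewrite (phi_xn _ _ Hc1 H4) ltrDl mulr_gt0 // sum3 /fpt.
have hd : forall l, 0 < (((ss (kk l)).1%:~R - (ss k).1%:~R) ^+ 2 +
                     ((ss (kk l)).2%:~R - (ss k).2%:~R) ^+ 2 :> R).
  by move=> l; apply: dist_pos; apply: contra (H1 l) => /eqP /ss_inj ->.
rewrite sum3 in Hc1; rewrite sum3 in H3x; rewrite sum3 in H3y.
by apply: conc3 => //; rewrite ?H3x ?H3y; exact: hd.
Qed.

End Improve.

Lemma emb_inj (R : realType) (p q : pt) : emb R p = emb R q -> p = q.
Proof.
case: p q => [a b] [c d]; rewrite /emb /= => -[/intr_inj -> /intr_inj ->] //.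
Qed.

Lemma seg_line (R : realType) (p q v : pt) (al : R) L : is_line L -> L (emb R v) ->
  (L (emb R p) \/ L (emb R q)) -> v != p -> v != q ->
  emb R v = ((1 - al) * (emb R p).1 + al * (emb R q).1,
             (1 - al) * (emb R p).2 + al * (emb R q).2) ->
  L (emb R p) /\ L (emb R q).
Proof.
move=> [a [b [c [_ ->]]]] /= hv hpq nvp nvq he.
have [e1 e2] : (v.1%:~R = (1 - al) * p.1%:~R + al * q.1%:~R :> R) /\
               (v.2%:~R = (1 - al) * p.2%:~R + al * q.2%:~R :> R).
  by case: he => -> ->.
have key : a * v.1%:~R + b * v.2%:~R - c =
  (1 - al) * (a * p.1%:~R + b * p.2%:~R - c) + al * (a * q.1%:~R + b * q.2%:~R - c) :> R.
  by rewrite e1 e2; ring.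
rewrite hv subrr in key.
have al0 : al != 0.
  apply/eqP => a0; move/eqP: nvp; apply; apply: (@emb_inj R).
  by rewrite he a0 subr0 !mul1r !mul0r !addr0.
have al1 : 1 - al != 0.
  apply/eqP => a1; move/eqP: nvq; apply; apply: (@emb_inj R).
  have a1' : al = 1 by apply/eqP; rewrite -subr_eq0 -oppr_eq0 opprB a1.
  by rewrite he a1' subrr !mul1r !mul0r !add0r.
case: hpq => /= h.
  rewrite h subrr mulr0 add0r in key.
  split => //; apply/eqP; rewrite -subr_eq0; apply/eqP.
  by move/esym/eqP: key; rewrite mulf_eq0 (negbTE al0) /= => /eqP.
rewrite h subrr mulr0 addr0 in key.
split => //; apply/eqP; rewrite -subr_eq0; apply/eqP.
by move/esym/eqP: key; rewrite mulf_eq0 (negbTE al1) /= => /eqP.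
Qed.

Lemma conv_bound (R : realType) (a b c x1 x2 x3 X lo hi : R) :
  0 <= a -> 0 <= b -> 0 <= c -> a + b + c = 1 -> X = a * x1 + b * x2 + c * x3 ->
  lo <= x1 <= hi -> lo <= x2 <= hi -> lo <= x3 <= hi -> lo <= X <= hi.
Proof.
move=> ha hb hc hs -> /andP [l1 h1] /andP [l2 h2] /andP [l3 h3].
have hc' : c = 1 - a - b by rewrite -hs; ring.
have E1 : a * x1 + b * x2 + c * x3 - lo = a * (x1 - lo) + b * (x2 - lo) + c * (x3 - lo).
  by rewrite hc'; ring.
have E2 : hi - (a * x1 + b * x2 + c * x3) = a * (hi - x1) + b * (hi - x2) + c * (hi - x3).
  by rewrite hc'; ring.
apply/andP; split.
  rewrite -subr_ge0 E1; rewrite !addr_ge0 // mulr_ge0 // subr_ge0 //.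
rewrite -subr_ge0 E2; rewrite !addr_ge0 // mulr_ge0 // subr_ge0 //.
Qed.

Theorem lemma3p2 (R : realType) :
  (exists A : rseq R, counterexample A) ->
  exists A : rseq R, counterexample A /\ triangle_property A.
Proof.
case=> A0 hA.
have ne : [set x | @feas R A0 x] !=set0 by exists (x0 A0); exact: feas_x0.
have cphi : {within [set x | @feas R A0 x], continuous (@phi R A0)}.
  by apply: continuous_subspaceT; exact: cont_phi.
have [xs hxs hmax] := compact_EVT_max ne (@compact_feas R A0) cphi.
have fx : @feas R A0 xs by move: hxs; rewrite inE.
have hmax' : forall x', @feas R A0 x' -> @phi R A0 x' <= @phi R A0 xs.
  by move=> x' h; apply: hmax; rewrite inE.
exists (Ast xs); split; first exact: Ast_counter.
move=> v1 v2 v3 v hu hm1 hm2 hm3 htri.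
apply: contrapT => hno.
have hne : Defs.mult (Ast xs) v <> 2^-1 by move=> e; apply: hno; left.
have hnoL : ~ exists L : set (R * R),
      [/\ is_line L, L (emb R v), count_in (Ast xs) L = 3%:R / 2%:R &
          forall p q : pt, (p, q) \in [:: (v1, v2); (v2, v3); (v1, v3)] ->
            on_segment (emb R p) (emb R q) (emb R v) ->
            L <> line_through (emb R p) (emb R q)].
  by move=> e; apply: hno; right.
have idx w : 0 < Defs.mult (Ast xs) w -> exists i, @ss R A0 i = w.
  rewrite mult_Ast => h; apply: contrapT => hn; move: h.
  rewrite big_pred0 ?ltxx // => i; apply/negbTE/eqP => e; apply: hn; by exists i.
have multk i : Defs.mult (Ast xs) (@ss R A0 i) = @mu R A0 xs i.
  rewrite mult_Ast (big_pred1 i) // => j; by rewrite /= (inj_eq (@ss_inj R A0)).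
have hv : v \in SS A0.
  pose lo : R := (- ((BB A0)%:Z))%:~R.
  pose hi : R := ((BB A0)%:Z)%:~R.
  have bnd : forall i : 'I_(mS A0),
    (lo <= (@ss R A0 i).1%:~R <= hi) /\ (lo <= (@ss R A0 i).2%:~R <= hi).
    move=> i; rewrite /lo /hi; have : @ss R A0 i \in SS A0 by apply: mem_nth.
    rewrite mem_SS !mem_rng => /andP [/andP [a1 a2] /andP [b1 b2]].
    by rewrite !ler_int a1 a2 b1 b2.
  have [i1 e1] := idx _ hm1; have [i2 e2] := idx _ hm2; have [i3 e3] := idx _ hm3.
  case: htri => a [b [c [ha [hb [hc [hs he]]]]]].
  case: he => ex ey.
  have [bx1 by1] := bnd i1; have [bx2 by2] := bnd i2; have [bx3 by3] := bnd i3.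
  rewrite -e1 -e2 -e3 in ex ey.
  have cx := conv_bound ha hb hc hs ex bx1 bx2 bx3.
  have cy := conv_bound ha hb hc hs ey by1 by2 by3.
  rewrite mem_SS !mem_rng; rewrite /lo /hi !ler_int in cx cy.
  by rewrite cx cy.
have [k ek] := @ss_ex R A0 v hv.
have [k1 ek1] := idx _ hm1; have [k2 ek2] := idx _ hm2; have [k3 ek3] := idx _ hm3.
subst v v1 v2 v3.
rewrite !multk in hm1 hm2 hm3 hne.
have mk : @mu R A0 xs k < 2^-1.
  have := fx; case=> _ [_ [_ [_ [h5 _]]]].
  by rewrite lt_neqAle h5 andbT; apply/eqP.
move: hu => /= /andP [h1 /andP [h2 /andP [h3 _]]].
rewrite !inE !negb_or !(inj_eq (@ss_inj R A0)) in h1 h2 h3.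
case/and3P: h1 => n12 n13 n1k; case/andP: h2 => n23 n2k.
rename h3 into n3k.
have nk1 : k1 != k by []. 
have F : forall L, is_line L -> L (emb R (@ss R A0 k)) -> @cnt R A0 xs L = 3%:R / 2%:R ->
    exists p q, (p, q) \in [:: (@ss R A0 k1, @ss R A0 k2); (@ss R A0 k2, @ss R A0 k3);
                               (@ss R A0 k1, @ss R A0 k3)] /\
      on_segment (emb R p) (emb R q) (emb R (@ss R A0 k)) /\ L (emb R p) /\ L (emb R q).
  move=> L hL hvL hc; apply: contrapT => hn; apply: hnoL; exists L; split => //.
    by rewrite count_Ast.
  move=> p q hpq hs e; apply: hn; exists p, q; split => //; split => //; rewrite e; split.
    by exists 0; rewrite /emb /= !mul0r !addr0.
  by exists 1; rewrite /emb /=; congr pair; ring.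
have F' : forall L, is_line L -> L (emb R (@ss R A0 k)) -> @cnt R A0 xs L = 3%:R / 2%:R ->
    [\/ L (emb R (@ss R A0 k1)) /\ L (emb R (@ss R A0 k2)),
        L (emb R (@ss R A0 k2)) /\ L (emb R (@ss R A0 k3)) |
        L (emb R (@ss R A0 k1)) /\ L (emb R (@ss R A0 k3))].
  move=> L hL hvL hc; have [p [q [hpq [_ [lp lq]]]]] := F L hL hvL hc.
  move: hpq; rewrite !inE => /or3P [] /eqP [ep eq]; subst p q.
  - by constructor 1.
  - by constructor 2.
  - by constructor 3.
have contra_x : (exists x', @feas R A0 x' /\ @phi R A0 xs < @phi R A0 x') -> False.
  by move=> [x' [hx' lt]]; move: (hmax' x' hx'); rewrite leNgt lt.
have seg : forall kp kq kr : 'I_(mS A0), kp != k -> kq != k -> kr != k ->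
    0 < @mu R A0 xs kp -> 0 < @mu R A0 xs kq -> 0 < @mu R A0 xs kr ->
    on_segment (emb R (@ss R A0 kp)) (emb R (@ss R A0 kq)) (emb R (@ss R A0 k)) ->
    (forall L, is_line L -> L (emb R (@ss R A0 k)) -> @cnt R A0 xs L = 3%:R / 2%:R ->
       L (emb R (@ss R A0 kp)) \/ L (emb R (@ss R A0 kq))) -> False.
  move=> kp kq kr np nq nr mp mq mr [al [/andP [al0 al1] he]] hsat.
  apply: contra_x; apply: (@improve R A0 xs k (fun l => nth kp [:: kp; kq; kr] l)
     (fun l => nth 0 [:: 1 - al; al; 0] l) fx).
  - by move=> l; case: (ord3_cases l) => [->|[->|->]].
  - by move=> l; case: (ord3_cases l) => [->|[->|->]] //=; rewrite subr_ge0.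
  - by rewrite sum3 /=; ring.
  - by rewrite sum3 /=; case: he => -> _; ring.
  - by rewrite sum3 /=; case: he => _ ->; ring.
  - by move=> l; case: (ord3_cases l) => [->|[->|->]].
  - by [].
  - move=> L hL hvL hc l; case: (ord3_cases l) => [->|[->|->]] //=; last by rewrite ltxx.
      move=> _; have := @seg_line R _ _ _ al L hL hvL (hsat L hL hvL hc).
      rewrite !(inj_eq (@ss_inj R A0)) ![k == _]eq_sym np nq => /(_ isT isT he).
      by case.
    move=> _; have := @seg_line R _ _ _ al L hL hvL (hsat L hL hvL hc).
    rewrite !(inj_eq (@ss_inj R A0)) ![k == _]eq_sym np nq => /(_ isT isT he).
    by case.
have [[p [q [hpq hs]]]|nseg] := pselect (exists p q,
    (p, q) \in [:: (@ss R A0 k1, @ss R A0 k2); (@ss R A0 k2, @ss R A0 k3);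
                   (@ss R A0 k1, @ss R A0 k3)] /\
    on_segment (emb R p) (emb R q) (emb R (@ss R A0 k))).
  move: hpq; rewrite !inE => /or3P [] /eqP [ep eq]; subst p q.
  - apply: (seg k1 k2 k3) => // L hL hvL hc.
    by case: (F' L hL hvL hc) => -[]; tauto.
  - apply: (seg k2 k3 k1) => // L hL hvL hc.
    by case: (F' L hL hvL hc) => -[]; tauto.
  - apply: (seg k1 k3 k2) => // L hL hvL hc.
    by case: (F' L hL hvL hc) => -[]; tauto.
case: htri => a [b [c [ha [hb [hc [hs he]]]]]].
apply: contra_x; apply: (@improve R A0 xs k (fun l => nth k1 [:: k1; k2; k3] l)
     (fun l => nth 0 [:: a; b; c] l) fx).
- by move=> l; case: (ord3_cases l) => [->|[->|->]].
- by move=> l; case: (ord3_cases l) => [->|[->|->]].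
- by rewrite sum3 /=.
- by rewrite sum3 /=; case: he => -> _.
- by rewrite sum3 /=; case: he => _ ->.
- by move=> l; case: (ord3_cases l) => [->|[->|->]].
- by [].
- move=> L hL hvL hcL; exfalso; apply: nseg.
  have [p [q [hpq [hs' _]]]] := F L hL hvL hcL; by exists p, q.
Qed.
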